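(* Let $\mathbf{A}\in\mathbb{R}^{m\times n}$ and run Algorithm 2 (described in the context) on $\mathbf{A}$. Consider any iteration of its loop at whose start the current shift $\alpha$ is positive, and let $\mathbf{Q}\in\mathbb{R}^{m\times l}$ (with orthonormal columns) and $\alpha>0$ be the current quantities at the start of that iteration, i.e. just before the SVD of $\mathbf{A}\mathbf{A}^{\mathrm{T}}\mathbf{Q}-\alpha\mathbf{Q}$ is computed. Then for every $i\le l$, $$\sigma_i(\mathbf{Q}^{\mathrm{T}}\mathbf{A})\le\sqrt{\sigma_i(\mathbf{A}\mathbf{A}^{\mathrm{T}}\mathbf{Q}-\alpha\mathbf{Q})+\alpha}\le\sigma_i(\mathbf{A}).$$
   Context: $\sigma_i(\cdot)$ denotes the $i$-th largest singular value. Algorithm 2 (exact arithmetic), with input $\mathbf{A}\in\mathbb{R}^{m\times n}$ and integers $k,s,p$: set $l=k+s$, let $\mathbf{\Omega}\in\mathbb{R}^{n\times l}$ have i.i.d. standard Gaussian entries, set $\mathbf{Q}=\mathrm{orth}(\mathbf{A}\mathbf{\Omega})$ (an $m\times l$ matrix with orthonormal columns spanning the column space of $\mathbf{A}\mathbf{\Omega}$) and $\alpha=0$; then for $j=1,\dots,p$: compute the economic SVD $\mathbf{A}\mathbf{A}^{\mathrm{T}}\mathbf{Q}-\alpha\mathbf{Q}=\mathbf{Q}'\hat{\mathbf{S}}\mathbf{W}^{\mathrm{T}}$ (singular values in decreasing order on the diagonal of $\hat{\mathbf{S}}$), replace $\mathbf{Q}$ by $\mathbf{Q}'$, and if $\hat{\mathbf{S}}(l,l)>\alpha$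 replace $\alpha$ by $(\hat{\mathbf{S}}(l,l)+\alpha)/2$. *)

(* Defs.v *)
From HB Require Import structures.
From mathcomp Require Import all_boot all_order all_algebra.
From Stdlib Require Import ClassicalEpsilon.
Set Implicit Arguments. Unset Strict Implicit. Unset Printing Implicit Defensive.
Import Order.TTheory GRing.Theory Num.Theory.
Local Open Scope ring_scope.

Section Defs.
Variable R : rcfType.

Definition orthonormal_cols (m l : nat) (Q : 'M[R]_(m, l)) : Prop :=
  Q^T *m Q = 1%:M.

Definition diagr (r : nat) (d : nat -> R) : 'M[R]_r :=
  diag_mx (\row_(i < r) d i).

(* d is the (0-indexed, nonincreasing) sequence of singular values of M,
   witnessed by an economic SVD  M = U diag(d) V^T  with r = min(m,n);
   convention: d i = 0 for i >= min(m,n). *)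
Definition is_singular_values (m n : nat) (M : 'M[R]_(m, n)) (d : nat -> R) : Prop :=
  exists (U : 'M[R]_(m, minn m n)) (V : 'M[R]_(n, minn m n)),
    [/\ orthonormal_cols U /\ orthonormal_cols V,
        (forall i j, (i <= j)%N -> d j <= d i),
        (forall i, 0 <= d i),
        (forall i, (minn m n <= i)%N -> d i = 0) &
        M = U *m diagr (minn m n) d *m V^T].

(* sv M i = sigma_{i+1}(M), the (i+1)-th largest singular value (0-indexed) *)
Definition sv (m n : nat) (M : 'M[R]_(m, n)) : nat -> R :=
  epsilon (inhabits (fun _ => 0)) (fun d => is_singular_values M d).

Definition econ_svd (m l : nat) (B : 'M[R]_(m, l)) (Q' : 'M[R]_(m, l))
  (d : nat -> R) : Prop :=
  exists W : 'M[R]_l,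
    [/\ orthonormal_cols Q', orthonormal_cols W,
        (forall i j, (i <= j < l)%N -> d j <= d i),
        (forall i, (i < l)%N -> 0 <= d i) &
        B = Q' *m diagr l d *m W^T].

(* A run of Algorithm 2 with input A, k, s, p and Gaussian sample Om:
   Q j, alpha j are the values of Q and alpha at the start of the (j+1)-th
   loop iteration (Q 0, alpha 0 are the initial values). *)
Definition alg2_run (m n k s : nat) (A : 'M[R]_(m, n)) (Om : 'M[R]_(n, k + s)) (p : nat)
  (Q : nat -> 'M[R]_(m, k + s)) (alpha : nat -> R) : Prop :=
  [/\ orthonormal_cols (Q 0%N),
      ((Q 0%N)^T == (A *m Om)^T)%MS,
      alpha 0%N = 0 &
      forall j, (j < p)%N ->
        exists d : nat -> R,
          econ_svd (A *m A^T *m Q j - alpha j *: Q j) (Q j.+1) d /\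
          alpha j.+1 = (if alpha j < d (k + s).-1
                        then (d (k + s).-1 + alpha j) / 2 else alpha j)].
End Defs.

(* Main.v *)
Require Import Defs.
From HB Require Import structures.
From mathcomp Require Import all_boot all_order all_algebra.
From mathcomp Require Import ring lra.
From mathcomp Require complex spectral sesquilinear polyrcf.
From Stdlib Require Import ClassicalEpsilon.
Import Order.TTheory GRing.Theory Num.Theory.
Local Open Scope ring_scope.

Set Implicit Arguments. Unset Strict Implicit. Unset Printing Implicit Defensive.


Section Basics.
Variable R : rcfType.

Definition nrm n (x : 'cV[R]_n) : R := \sum_i x i 0 ^+ 2.
Definition dotv n (x y : 'cV[R]_n) : R := (x^T *m y) 0 0.

Lemma nrmE n (x : 'cV[R]_n) : nrm x = dotv x x.
Proof. by rewrite /dotv mxE; apply: eq_bigr => i _; rewrite !mxE expr2. Qed.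

Lemma nrm_ge0 n (x : 'cV[R]_n) : 0 <= nrm x.
Proof. by apply: sumr_ge0 => i _; apply: sqr_ge0. Qed.

Lemma nrm_eq0 n (x : 'cV[R]_n) : nrm x = 0 -> x = 0.
Proof.
move=> /eqP; rewrite psumr_eq0 => [/allP H|i _]; last exact: sqr_ge0.
apply/matrixP => i j; rewrite ord1 mxE.
by have /implyP/(_ isT) := H i (mem_index_enum _); rewrite sqrf_eq0 => /eqP.
Qed.

Lemma dotvC n (x y : 'cV[R]_n) : dotv x y = dotv y x.
Proof.
rewrite /dotv !mxE; apply: eq_bigr => i _; rewrite !mxE mulrC //.
Qed.

Lemma dotvDl n (x y z : 'cV[R]_n) : dotv (x + y) z = dotv x z + dotv y z.
Proof. by rewrite /dotv linearD /= mulmxDl mxE. Qed.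

Lemma dotvZl n a (x z : 'cV[R]_n) : dotv (a *: x) z = a * dotv x z.
Proof. by rewrite /dotv linearZ /= -scalemxAl mxE. Qed.

Lemma dotvNl n (x z : 'cV[R]_n) : dotv (- x) z = - dotv x z.
Proof. by rewrite -scaleN1r dotvZl mulN1r. Qed.

Lemma dotvDr n (x y z : 'cV[R]_n) : dotv z (x + y) = dotv z x + dotv z y.
Proof. by rewrite dotvC dotvDl !(dotvC z). Qed.

Lemma dotvZr n a (x z : 'cV[R]_n) : dotv z (a *: x) = a * dotv z x.
Proof. by rewrite dotvC dotvZl dotvC. Qed.

Lemma dotvNr n (x z : 'cV[R]_n) : dotv z (- x) = - dotv z x.
Proof. by rewrite dotvC dotvNl dotvC. Qed.

Lemma nrmD n (x y : 'cV[R]_n) : nrm (x + y) = nrm x + 2 * dotv x y + nrm y.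
Proof. rewrite !nrmE dotvDl !dotvDr (dotvC y x); ring. Qed.

Lemma nrmB n (x y : 'cV[R]_n) : nrm (x - y) = nrm x - 2 * dotv x y + nrm y.
Proof. rewrite !nrmE dotvDl !dotvDr !dotvNl !dotvNr (dotvC y x); ring. Qed.

Lemma nrmZ n a (x : 'cV[R]_n) : nrm (a *: x) = a ^+ 2 * nrm x.
Proof. rewrite !nrmE dotvZl dotvZr; ring. Qed.

Definition orth m r (U : 'M[R]_(m, r)) := U^T *m U = 1%:M.

Lemma dotv_orth m r (U : 'M[R]_(m, r)) x y : orth U ->
  dotv (U *m x) (U *m y) = dotv x y.
Proof. by move=> hU; rewrite /dotv trmx_mul -mulmxA (mulmxA U^T) hU mul1mx. Qed.

Lemma nrm_orth m r (U : 'M[R]_(m, r)) x : orth U -> nrm (U *m x) = nrm x.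
Proof. by move=> hU; rewrite !nrmE dotv_orth. Qed.

Lemma dotv_mul m r (U : 'M[R]_(m, r)) x y : dotv x (U *m y) = dotv (U^T *m x) y.
Proof. by rewrite /dotv trmx_mul trmxK mulmxA. Qed.

End Basics.


Section House.
Variable R : rcfType.

Lemma dotv_delta n (x : 'cV[R]_n) i : dotv x (delta_mx i 0) = x i 0.
Proof.
rewrite /dotv mxE (bigD1 i) //= big1 => [|k hk]; rewrite !mxE ?eqxx /=.
  by rewrite mulr1 addr0.
by rewrite (negbTE hk) mulr0.
Qed.

Lemma mx11_mul n (w : 'cV[R]_n) : w^T *m w = (nrm w)%:M.
Proof. by rewrite [LHS]mx11_scalar nrmE. Qed.

Lemma householder n (v : 'cV[R]_n.+1) : nrm v = 1 ->
  exists H : 'M[R]_n.+1, orth H /\ forall i, H i 0 = v i 0.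
Proof.
move=> hv; set e := (delta_mx 0 0 : 'cV[R]_n.+1); set w := v - e.
have hnw : nrm w = 2 - 2 * v 0 0.
  rewrite /w nrmB hv dotv_delta nrmE dotv_delta !mxE eqxx /=; ring.
have [hw|hw] := eqVneq (nrm w) 0.
  have /eqP : w = 0 by apply: nrm_eq0.
  rewrite subr_eq0 => /eqP hve.
  exists 1%:M; split; first by rewrite /orth trmx1 mulmx1.
  by move=> i; rewrite hve !mxE andbT.
set c := 2 / nrm w.
have wE : w = v - e by []. clearbody w.
exists (1%:M - c *: (w *m w^T)); split.
  rewrite /orth; set H := (X in X^T).
  have -> : H^T = H.
    apply/matrixP => a b; rewrite /H !mxE !big_ord1 !mxE eq_sym; ring.
  rewrite /H.
  rewrite /H !(mulmxDl, mulmxDr, mulNmx, mulmxN, mul1mx, mulmx1).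
  rewrite -!scalemxAl -!scalemxAr !mulmxA -(mulmxA w) mx11_mul.
  rewrite mul_mx_scalar -scalemxAl !scalerA.
  have -> : c * (c * nrm w) = c + c by rewrite /c; field.
  by rewrite opprK scalerDl addKr subrK.
have h0 : v 0 0 != 1.
  by apply: contra hw => /eqP h; rewrite hnw h; apply/eqP; ring.
have hc : c * (v 0 0 - 1) = -1.
  rewrite /c hnw; field.
  by rewrite -hnw.
move=> i; rewrite !mxE big_ord1 wE !mxE !eqxx /= !andbT.
rewrite (mulrC (v i 0 - _)) mulrA hc; ring.
Qed.

End House.

Module M3.
Import complex spectral sesquilinear.


Lemma real_eig (R : rcfType) n (N : 'M[R]_n) : N^T = N -> N != 0 ->
  exists2 x, x != 0 & eigenvalue N x.
Proof.
move=> hT hN0.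
pose f := real_complex R.
pose NC := map_mx f N.
have hreal : forall x : R, f x \is Num.real.
  by move=> x; apply/complex_realP; exists x.
have hNC : NC \is hermsymmx.
  apply/is_hermitianmxP; rewrite expr0 scale1r.
  apply/matrixP => a b; rewrite !mxE.
  rewrite conj_Creal ?hreal //.
  by rewrite -{1}hT mxE.
have hE := orthomx_spectralP (hermitian_normalmx hNC).
have hD := hermitian_spectral_diag_real hNC.
set P := spectralmx NC in hE; set D := spectral_diag NC in hE hD.
have hPu : P \in unitmx by apply: spectral_unit.
have [j hj] : exists j, D 0 j != 0.
  apply/existsP; apply: contraR hN0 => /existsPn hz.
  have D0 : D = 0 by apply/matrixP => a b; rewrite ord1 mxE; apply/eqP/negPn/hz.
  have : NC = 0 by rewrite hE D0 raddf0 mulmx0 mul0mx.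
  by move/eqP; rewrite map_mx_eq0 => /eqP ->.
have hPN : P *m NC = diag_mx D *m P by rewrite hE !mulmxA mulmxV // mul1mx.
have heig : eigenvalue NC (D 0 j).
  apply/eigenvalueP; exists (row j P).
    by rewrite -row_mul hPN row_mul row_diag_mx -scalemxAl -rowE.
  apply/negP => /eqP hr.
  move: hr; rewrite rowE => /(congr1 (mulmx^~ (invmx P))) /=.
  rewrite mulmxK // mul0mx => /matrixP /(_ 0 j); rewrite !mxE !eqxx /= => /eqP.
  by rewrite oner_eq0.
have /complex_realP [k hk] : D 0 j \is Num.real by apply: (mxOverP hD).
exists k.
  by apply: contraNneq hj => k0; rewrite hk k0.
rewrite eigenvalue_root_char -(fmorph_root f) map_char_poly.
by rewrite -eigenvalue_root_char; move: heig; rewrite hk.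
Qed.

End M3.
Import M3.

Module M4.
Import polyrcf.


Section Top.
Variable R : rcfType.

Definition fmax (a b : R) := if a <= b then b else a.

Lemma foldr_max_ge (s : seq R) x : x \in s -> x <= foldr fmax 0 s.
Proof.
elim: s => // y s IH; rewrite in_cons => /orP [/eqP ->|hx] /=; rewrite /fmax.
  by case: ifP => // h; rewrite lexx.
case: ifP => h; first exact: IH.
by apply: (le_trans (IH hx)); rewrite ltW // ltNge h.
Qed.

Lemma foldr_max_in (s : seq R) : foldr fmax 0 s = 0 \/ foldr fmax 0 s \in s.
Proof.
elim: s => [|y s IH] /=; first by left.
rewrite /fmax; case: ifP => h; last by right; exact: mem_head.
by case: IH => IH; [left | right; rewrite in_cons IH orbT].
Qed.

Lemma colM0 m n (M : 'M[R]_(m, n)) : (forall j, M *m (delta_mx j 0 : 'cV_n) = 0) -> M = 0.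
Proof.
move=> h; apply/matrixP => i j; have /matrixP /(_ i 0) := h j.
rewrite !mxE (bigD1 j) //= big1 => [|k hk]; last by rewrite !mxE (negbTE hk) mulr0.
by rewrite !mxE !eqxx mulr1 addr0.
Qed.

Lemma eig_col n (N : 'M[R]_n) mu : N^T = N -> eigenvalue N mu ->
  exists2 x : 'cV[R]_n, nrm x = 1 & N *m x = mu *: x.
Proof.
move=> hT /eigenvalueP [u hu hu0].
have hx : u^T != 0 by rewrite trmx_eq0.
have hpos : 0 < nrm u^T.
  rewrite lt_def nrm_ge0 andbT; apply: contra hx => /eqP h; apply/eqP.
  exact: nrm_eq0.
exists ((Num.sqrt (nrm u^T))^-1 *: u^T).
  rewrite nrmZ exprVn sqr_sqrtr ?ltW // mulVf //; exact: lt0r_neq0.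
by rewrite -scalemxAr -{1}hT -trmx_mul hu linearZ /= scalerA mulrC -scalerA.
Qed.

Lemma top_eig m n (M : 'M[R]_(m, n)) : M != 0 ->
  exists lam : R, exists2 v : 'cV[R]_n,
    [/\ 0 < lam, nrm v = 1 & M^T *m M *m v = lam *: v] &
    forall mu, eigenvalue (M^T *m M) mu -> mu <= lam.
Proof.
move=> hM.
set N := M^T *m M.
have hT : N^T = N by rewrite /N trmx_mul trmxK.
have hN0 : N != 0.
  apply: contra hM => /eqP hN; apply/eqP/colM0 => j.
  apply: nrm_eq0; rewrite nrmE dotv_mul mulmxA -/N hN mul0mx.
  by rewrite dotv_delta mxE.
have hpsd : forall mu, eigenvalue N mu -> 0 <= mu.
  move=> mu /(eig_col hT) [x hx hNx].
  have : dotv x (N *m x) = mu by rewrite hNx dotvZr -nrmE hx mulr1.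
  by rewrite /N -mulmxA dotv_mul trmxK -nrmE => <-; apply: nrm_ge0.
have hp : char_poly N != 0 by apply: monic_neq0; apply: char_poly_monic.
have hroots := roots_on_rootsR hp.
have hin : forall x, eigenvalue N x -> x \in rootsR (char_poly N).
  by move=> x hx; rewrite -hroots eigenvalue_root_char in hx *; rewrite hx.
set lam := foldr fmax 0 (rootsR (char_poly N)).
have hmax : forall mu, eigenvalue N mu -> mu <= lam.
  by move=> mu hmu; apply: foldr_max_ge; apply: hin.
have [x hx0 hx] := real_eig hT hN0.
have hlam : 0 < lam.
  apply: (lt_le_trans _ (hmax _ hx)).
  by rewrite lt_def hx0 hpsd.
have hlamE : eigenvalue N lam.
  case: (foldr_max_in (rootsR (char_poly N))) => h.
    by move: hlam; rewrite /lam h ltxx.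
  by rewrite eigenvalue_root_char; move: h; rewrite -hroots => /andP [].
have [v hv hNv] := eig_col hT hlamE.
by exists lam => //; exists v.
Qed.

End Top.

End M4.
Import M4.


Section SVD.
Variable R : rcfType.

Definition svdw m n r (M : 'M[R]_(m, n)) (U : 'M[R]_(m, r)) (V : 'M[R]_(n, r))
  (d : nat -> R) : Prop :=
  [/\ orth U, orth V, (forall i j, (i <= j)%N -> (j < r)%N -> d j <= d i),
      (forall i, (i < r)%N -> 0 <= d i) & M = U *m diagr r d *m V^T].

Lemma orth_pid m r : (r <= m)%N -> orth (pid_mx r : 'M[R]_(m, r)).
Proof.
move=> h; rewrite /orth tr_pid_mx mul_pid_mx minnn (minn_idPr h) pid_mx_1 //.
Qed.

Lemma diagr0 r : diagr r (fun _ => 0 : R) = 0.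
Proof. by apply/matrixP => i j; rewrite !mxE mul0rn. Qed.

Lemma svdw_zero m n r : (r <= m)%N -> (r <= n)%N ->
  @svdw m n r 0 (pid_mx r) (pid_mx r) (fun _ => 0).
Proof.
move=> hm hn; split => //; try exact: orth_pid.
by rewrite diagr0 mulmx0 mul0mx.
Qed.

Lemma col_e0 a b (X : 'M[R]_(a, b.+1)) i : (X *m (delta_mx 0 0 : 'cV_b.+1)) i 0 = X i 0.
Proof.
rewrite mxE (bigD1 0) //= big1 => [|k hk]; rewrite !mxE ?eqxx /=.
  by rewrite mulr1 addr0.
by rewrite (negbTE hk) mulr0.
Qed.

Lemma Hcol b (H : 'M[R]_b.+1) (v : 'cV[R]_b.+1) : (forall i, H i 0 = v i 0) ->
  H *m (delta_mx 0 0 : 'cV_b.+1) = v.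
Proof. by move=> h; apply/matrixP => i j; rewrite ord1 col_e0 h. Qed.

Lemma orthT_col p (G : 'M[R]_p.+1) (g : 'cV[R]_p.+1) : orth G -> (forall i, G i 0 = g i 0) ->
  G^T *m g = (delta_mx 0 0 : 'cV_p.+1).
Proof. by move=> hG hg; rewrite -(Hcol hg) mulmxA hG mul1mx. Qed.

Lemma conj_col p q (G : 'M[R]_p.+1) (H : 'M[R]_q.+1) (A : 'M[R]_(p.+1, q.+1))
  (g : 'cV[R]_p.+1) (h : 'cV[R]_q.+1) s : orth G -> (forall i, G i 0 = g i 0) -> (forall i, H i 0 = h i 0) ->
  A *m h = s *: g -> forall i, (G^T *m A *m H) i 0 = s * (i == 0)%:R.
Proof.
move=> hG hg hh hA i.
rewrite -col_e0 -!mulmxA (Hcol hh) hA -scalemxAr orthT_col // !mxE eqxx andbT.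
by rewrite mulr_natr.
Qed.

Lemma orthM m n r (A : 'M[R]_(m, n)) (B : 'M[R]_(n, r)) : orth A -> orth B -> orth (A *m B).
Proof. by move=> hA hB; rewrite /orth trmx_mul mulmxA -(mulmxA B^T) hA mulmx1. Qed.

Lemma orth_block p r (X : 'M[R]_(p, r)) : orth X ->
  orth (block_mx (1%:M : 'M[R]_1) 0 0 X).
Proof.
move=> hX; rewrite /orth tr_block_mx mulmx_block !trmx0 trmx1 !mulmx0 !mul0mx.
by rewrite !mulmx1 !addr0 !add0r hX -scalar_mx_block.
Qed.

Lemma diagr_block r (d : nat -> R) :
  diagr (1 + r) d = block_mx ((d 0%N)%:M : 'M_1) 0 0 (diagr r (fun i => d i.+1)).
Proof.
apply/matrixP => i j.
case: (split_ordP i) => i' ->; case: (split_ordP j) => j' ->;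
  rewrite ?block_mxEul ?block_mxEur ?block_mxEdl ?block_mxEdr !mxE.
- by rewrite !ord1.
- by rewrite eq_lrshift mulr0n.
- by rewrite eq_rlshift mulr0n.
- by rewrite eq_rshift.
Qed.

End SVD.


Section SVD2.
Variable R : rcfType.

Lemma nrm_e0 r : nrm (delta_mx 0 0 : 'cV[R]_r.+1) = 1.
Proof. by rewrite nrmE dotv_delta mxE eqxx. Qed.

Lemma nrm0 n : nrm (0 : 'cV[R]_n) = 0.
Proof. by rewrite /nrm big1 // => i _; rewrite mxE expr2 mulr0. Qed.

Lemma diag_e0 r (d : nat -> R) :
  diagr r.+1 d *m delta_mx 0 0 = d 0%N *: (delta_mx 0 0 : 'cV[R]_r.+1).
Proof.
apply/matrixP => i j; rewrite mul_diag_mx !mxE.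
by have [->|h] := eqVneq i 0; rewrite ?eqxx ?(negbTE h) /= ?mulr0.
Qed.

Lemma tr_diagr r (d : nat -> R) : (diagr r d)^T = diagr r d.
Proof. by rewrite /diagr tr_diag_mx. Qed.

Lemma eig_of_col n (N : 'M[R]_n) (x : 'cV[R]_n) mu : N^T = N -> x != 0 ->
  N *m x = mu *: x -> eigenvalue N mu.
Proof.
move=> hT hx hN; apply/eigenvalueP; exists x^T; last by rewrite trmx_eq0.
by rewrite -{1}hT -trmx_mul hN linearZ.
Qed.

Lemma svdw_eig m n r (M : 'M[R]_(m, n)) U V d :
  @svdw R m n r.+1 M U V d -> eigenvalue (M^T *m M) (d 0%N ^+ 2).
Proof.
case=> hU hV _ _ hM.
set x := V *m (delta_mx 0 0 : 'cV_r.+1).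
have hMx : M *m x = d 0%N *: (U *m delta_mx 0 0).
  by rewrite hM /x -!mulmxA (mulmxA V^T) hV mul1mx diag_e0 scalemxAr.
have hMt : M^T *m (U *m delta_mx 0 0) = d 0%N *: x.
  rewrite hM !trmx_mul trmxK tr_diagr -!mulmxA (mulmxA U^T) hU mul1mx.
  by rewrite diag_e0 scalemxAr.
apply: (@eig_of_col _ _ x).
- by rewrite trmx_mul trmxK.
- apply/negP => /eqP hx0.
  have : nrm x = 1 by rewrite nrm_orth // nrm_e0.
  by rewrite hx0 nrm0 => /eqP; rewrite eq_sym oner_eq0.
- by rewrite -mulmxA hMx -scalemxAr hMt scalerA expr2.
Qed.

Lemma eig_lift p q (Hu : 'M[R]_(1 + p)) (Hv : 'M[R]_(1 + q)) (M' : 'M[R]_(p, q)) s mu :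
  orth Hu -> orth Hv -> eigenvalue (M'^T *m M') mu ->
  eigenvalue ((Hu *m block_mx (s%:M : 'M_1) 0 0 M' *m Hv^T)^T *m
              (Hu *m block_mx (s%:M : 'M_1) 0 0 M' *m Hv^T)) mu.
Proof.
move=> hU hV /eigenvalueP [y hy hy0].
set B := block_mx (s%:M : 'M_1) 0 0 M'.
have hN : (Hu *m B *m Hv^T)^T *m (Hu *m B *m Hv^T) = Hv *m (B^T *m B) *m Hv^T.
  by rewrite !trmx_mul trmxK !mulmxA -(mulmxA _ Hu^T Hu) hU mulmx1.
have hBB : B^T *m B = block_mx ((s * s)%:M : 'M_1) 0 0 (M'^T *m M').
  rewrite /B tr_block_mx !trmx0 tr_scalar_mx mulmx_block !mulmx0 !mul0mx.
  by rewrite !addr0 !add0r scalar_mxM.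
rewrite hN hBB.
apply/eigenvalueP; exists (row_mx (0 : 'rV_1) y *m Hv^T).
  rewrite !mulmxA -(mulmxA _ Hv^T Hv) hV mulmx1 mul_row_block.
  rewrite !mulmx0 !mul0mx !addr0 !add0r hy.
  by rewrite scalemxAl scale_row_mx scaler0.
apply/eqP => h; move/eqP: hy0; apply.
have : row_mx (0 : 'rV_1) y = 0 by rewrite -[row_mx _ _]mulmx1 -hV mulmxA h mul0mx.
by rewrite -row_mx0 => /eq_row_mx [].
Qed.

End SVD2.


Section SVD3.
Variable R : rcfType.

Lemma block_prod p r q (U' : 'M[R]_(p, r)) (V' : 'M[R]_(q, r)) s (D : 'M[R]_r) :
  block_mx (1%:M : 'M_1) 0 0 U' *m block_mx (s%:M : 'M_1) 0 0 D *m
    (block_mx (1%:M : 'M_1) 0 0 V')^T = block_mx (s%:M : 'M_1) 0 0 (U' *m D *m V'^T).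
Proof.
rewrite tr_block_mx !trmx0 trmx1 !mulmx_block.
rewrite !mulmx0 !mul0mx !mulmx1 !mul1mx !addr0 !add0r.
congr block_mx; apply/matrixP => i j; rewrite !mxE big1 // => k _; rewrite !mxE mul0r; reflexivity.
Qed.

Lemma svd_exists m : forall n (M : 'M[R]_(m, n)),
  exists r, r = minn m n /\ exists U V d, @svdw R m n r M U V d.
Proof.
elim: m => [|m IH] n M.
  exists 0%N; split; first by rewrite min0n.
  exists (pid_mx 0), (pid_mx 0), (fun _ => 0).
  by rewrite (flatmx0 M); apply: svdw_zero.
case: n M => [|n] M.
  exists 0%N; split; first by rewrite minn0.
  exists (pid_mx 0), (pid_mx 0), (fun _ => 0).
  by rewrite (thinmx0 M); apply: svdw_zero.
have [->|hM] := eqVneq M 0.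
  exists (minn m.+1 n.+1); split => //.
  exists (pid_mx (minn m.+1 n.+1)), (pid_mx (minn m.+1 n.+1)), (fun _ => 0).
  by apply: svdw_zero; [apply: geq_minl | apply: geq_minr].
have [lam [v [hlam hv hMv] hmax]] := top_eig hM.
set s := Num.sqrt lam.
have hs : 0 < s by rewrite sqrtr_gt0.
have hs2 : s ^+ 2 = lam by rewrite sqr_sqrtr // ltW.
have hs0 : s != 0 by rewrite gt_eqF.
set u := s^-1 *: (M *m v).
have hMv' : M *m v = s *: u by rewrite /u scalerA mulfV // scale1r.
have hu : nrm u = 1.
  rewrite /u nrmZ nrmE dotv_mul mulmxA hMv dotvZl -nrmE hv mulr1 exprVn hs2.
  by rewrite mulVf // gt_eqF.
have hMtu : M^T *m u = s *: v.
  rewrite /u -scalemxAr mulmxA hMv scalerA -hs2 expr2 mulrA mulVf // mul1r //.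
have [Hv [hHv hHv0]] := householder hv.
have [Hu [hHu hHu0]] := householder hu.
have hK0 := conj_col hHu hHu0 hHv0 hMv'.
have hKT0 : forall i, (Hu^T *m M *m Hv)^T i 0 = s * (i == 0)%:R.
  move=> i; rewrite !trmx_mul trmxK mulmxA; exact: (conj_col hHv hHv0 hHu0 hMtu).
set K := Hu^T *m M *m Hv in hK0 hKT0.
have hUU : Hu *m Hu^T = 1%:M := mulmx1C hHu.
have hVV : Hv *m Hv^T = 1%:M := mulmx1C hHv.
have hMK : M = Hu *m K *m Hv^T by rewrite /K !mulmxA hUU mul1mx -mulmxA hVV mulmx1.
clearbody K.
pose K' : 'M[R]_(1 + m, 1 + n) := K.
set M' := drsubmx K'.
have l0 : forall p, lshift p (0 : 'I_1) = 0 by move=> p; apply: val_inj.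
have hKb : K' = block_mx (s%:M : 'M_1) 0 0 M'.
  rewrite -{1}(submxK K'); congr block_mx; apply/matrixP => i j; rewrite !mxE.
  - by rewrite !ord1 !l0 /K' hK0 eqxx mulr1.
  - have hne : (rshift 1 j == 0 :> 'I_(1 + n)) = false.
      by apply/negbTE; rewrite -val_eqE.
    have := hKT0 (rshift 1 j); rewrite mxE hne mulr0.
    by rewrite !ord1 l0.
  - have hne : (rshift 1 i == 0 :> 'I_(1 + m)) = false.
      by apply/negbTE; rewrite -val_eqE.
    have := hK0 (rshift 1 i); rewrite hne mulr0.
    by rewrite !ord1 l0.
have [r' [hr' [U' [V' [d' hsvd']]]]] := IH n M'.
have key : (0 < r')%N -> d' 0%N <= s.
  case: r' {hr'} U' V' hsvd' => // r0 U' V' hsvd' _.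
  have he := svdw_eig hsvd'.
  have := eig_lift s hHu hHv he; rewrite -hKb /K' -hMK => /hmax.
  rewrite -hs2 => h2.
  case: hsvd' => _ _ _ hpos _.
  have := hpos 0%N isT; nra.
case: hsvd' => hU' hV' hord' hpos' hM'.
exists (1 + r')%N; split; first by rewrite hr' minnSS.
exists (Hu *m block_mx (1%:M : 'M_1) 0 0 U'), (Hv *m block_mx (1%:M : 'M_1) 0 0 V').
exists (fun i => if i is i'.+1 then d' i' else s).
split.
- exact: orthM hHu (orth_block hU').
- exact: orthM hHv (orth_block hV').
- move=> [|i] [|j] //= hij hj.
  + have hj' : (j < r')%N by [].
    apply: le_trans (hord' 0%N j isT hj') _.
    by apply: key; apply: leq_ltn_trans (leq0n j) hj'.
  + exact: (hord' i j hij hj).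
- move=> [|i] hi /=; [exact: ltW | exact: hpos'].
- rewrite diagr_block /= trmx_mul -!mulmxA hMK -!mulmxA; congr (Hu *m _).
  rewrite !mulmxA; congr (_ *m Hv^T).
  have hKb' : K = block_mx (s%:M : 'M_1) 0 0 M' := hKb.
  rewrite hKb' hM'; symmetry; exact: block_prod.
Qed.

End SVD3.


Section Tools.
Variable R : rcfType.

Lemma sv_spec m n (M : 'M[R]_(m, n)) : is_singular_values M (sv M).
Proof.
rewrite /sv; apply: epsilon_spec.
have [r [hr [U [V [d [hU hV hord hpos hM]]]]]] := svd_exists M.
subst r.
exists (fun i => if (i < minn m n)%N then d i else 0), U, V; split => //.
- move=> i j hij; case: ifP => hj; case: ifP => hi //.
  + exact: hord.
  + by move: hi; rewrite (leq_ltn_trans hij hj).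
  + by apply: hpos.
- by move=> i; case: ifP => // hi; apply: hpos.
- by move=> i hi; rewrite ltnNge hi.
- rewrite hM; congr (_ *m _ *m _); apply/matrixP => a b; rewrite !mxE.
  by rewrite ltn_ord.
Qed.

Lemma sv_svdw m n (M : 'M[R]_(m, n)) :
  exists U V, @svdw R m n (minn m n) M U V (sv M).
Proof.
have [U [V [[hU hV] hord hpos _ hM]]] := sv_spec M.
by exists U, V; split => // i j hij _; apply: hord.
Qed.

Lemma sv_ge0 m n (M : 'M[R]_(m, n)) i : 0 <= sv M i.
Proof. by have [U [V [_ _ h _ _]]] := sv_spec M. Qed.

Lemma sv_zero m n (M : 'M[R]_(m, n)) i : (minn m n <= i)%N -> sv M i = 0.
Proof. by have [U [V [_ _ _ h _]]] := sv_spec M; apply: h. Qed.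

Definition E p q : 'M[R]_(p, q) := \matrix_(a, b) ((a : nat) == b)%:R.

Lemma sum_delta p (F : 'I_p -> R) (k : nat) (hk : (k < p)%N) :
  \sum_(a < p) ((a : nat) == k)%:R * F a = F (Ordinal hk).
Proof.
rewrite (bigD1 (Ordinal hk)) //= eqxx mul1r big1 ?addr0 // => a ha.
by rewrite -val_eqE /= in ha; rewrite (negbTE ha) mul0r.
Qed.

Lemma E_orth p q : (q <= p)%N -> orth (E p q).
Proof.
move=> hqp; rewrite /orth; apply/matrixP => b b'; rewrite !mxE.
have hb : (b < p)%N := leq_trans (ltn_ord b) hqp.
rewrite (eq_bigr (fun a : 'I_p => ((a : nat) == b)%:R * ((a : nat) == b')%:R)).
  by rewrite sum_delta /= val_eqE.
by move=> a _; rewrite !mxE.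
Qed.

Lemma Ey_out p q (y : 'cV[R]_q) (a : 'I_p) : (q <= a)%N -> (E p q *m y) a 0 = 0.
Proof.
move=> ha; rewrite mxE big1 // => b _; rewrite mxE.
have : (a : nat) != b by rewrite neq_ltn (leq_trans (ltn_ord b) ha) orbT.
by move/negbTE ->; rewrite mul0r.
Qed.

Lemma ETw p q (w : 'cV[R]_p) (a : 'I_p) : (a < q)%N ->
  (E p q)^T *m w = 0 -> w a 0 = 0.
Proof.
move=> ha /matrixP /(_ (Ordinal ha) 0); rewrite !mxE.
rewrite (eq_bigr (fun b : 'I_p => ((b : nat) == a)%:R * w b 0)).
  by rewrite sum_delta /= => h; rewrite -h; congr (w _ 0); apply: val_inj.
by move=> b _; rewrite !mxE.
Qed.

Lemma nrm_diag r (f : nat -> R) (z : 'cV[R]_r) :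
  nrm (diagr r f *m z) = \sum_(a < r) (f a * z a 0) ^+ 2.
Proof. by apply: eq_bigr => a _; rewrite mul_diag_mx !mxE. Qed.

Lemma nrm_diag_bound r (f : nat -> R) (z : 'cV[R]_r) i c :
  (forall a : 'I_r, (a < i)%N -> z a 0 = 0) ->
  (forall a : 'I_r, (i <= a)%N -> f a ^+ 2 <= c) ->
  nrm (diagr r f *m z) <= c * nrm z.
Proof.
move=> hz hf; rewrite nrm_diag /nrm mulr_sumr; apply: ler_sum => a _.
case: (ltnP a i) => ha.
  by rewrite hz // !mulr0 expr0n /= mulr0.
by rewrite exprMn ler_wpM2r ?sqr_ge0 ?hf.
Qed.

Lemma nrm_diag_top r (d : nat -> R) i (y : 'cV[R]_i.+1) :
  (forall a b, (a <= b)%N -> (b < r)%N -> d b <= d a) ->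
  (forall a, (a < r)%N -> 0 <= d a) -> (i < r)%N ->
  d i ^+ 2 * nrm y <= nrm (diagr r d *m (E r i.+1 *m y)).
Proof.
move=> hord hpos hir.
have hE : orth (E r i.+1) := E_orth hir.
rewrite -(nrm_orth y hE) nrm_diag /nrm mulr_sumr; apply: ler_sum => a _.
case: (ltnP i a) => ha.
  by rewrite Ey_out // !mulr0 expr0n /= mulr0.
rewrite exprMn ler_wpM2r ?sqr_ge0 //.
rewrite ler_sqr ?nnegrE; first exact: hord.
  by apply: hpos.
by apply: hpos.
Qed.

Lemma ker_exists i (A : 'M[R]_(i, i.+1)) : exists2 y : 'cV[R]_i.+1, y != 0 & A *m y = 0.
Proof.
have hr : \rank (kermx A^T) != 0%N.
  rewrite mxrank_ker -lt0n subn_gt0 ltnS mxrank_tr; exact: rank_leq_row.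
have [k hk] : exists k, row k (kermx A^T) != 0.
  apply/existsP; apply: contraR hr => /existsPn h.
  rewrite mxrank_eq0; apply/eqP/row_matrixP => k; rewrite row0.
  by apply/eqP/negPn/h.
exists (row k (kermx A^T))^T; first by rewrite trmx_eq0.
by rewrite -{1}[A]trmxK -trmx_mul -row_mul mulmx_ker row0 trmx0.
Qed.

Lemma nrm_pos n (y : 'cV[R]_n) : y != 0 -> 0 < nrm y.
Proof.
move=> hy; rewrite lt_def nrm_ge0 andbT; apply: contra hy => /eqP h.
by apply/eqP; apply: nrm_eq0.
Qed.

Lemma tool1 m n r (M : 'M[R]_(m, n)) U V d i (C : 'M[R]_(i, n)) c :
  @svdw R m n r M U V d -> (i < r)%N ->
  (forall x, C *m x = 0 -> nrm (M *m x) <= c * nrm x) -> d i ^+ 2 <= c.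
Proof.
move=> [hU hV hord hpos hM] hir hC.
have [y hy0 hy] := ker_exists (C *m (V *m E r i.+1)).
have hx : C *m (V *m E r i.+1 *m y) = 0 by rewrite !mulmxA -(mulmxA C) hy.
have := hC _ hx.
have hnx : nrm (V *m E r i.+1 *m y) = nrm y.
  by rewrite nrm_orth //; apply: orthM hV (E_orth hir).
rewrite hnx hM -!mulmxA (mulmxA V^T) hV mul1mx nrm_orth // => h.
have := le_trans (nrm_diag_top y hord hpos hir) h.
by rewrite ler_pM2r // nrm_pos.
Qed.

Lemma pythag m r (U : 'M[R]_(m, r)) (y : 'cV[R]_m) : orth U ->
  nrm y = nrm (U^T *m y) + nrm (y - U *m (U^T *m y)).
Proof.
move=> hU.
have hz : U^T *m (y - U *m (U^T *m y)) = 0.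
  by rewrite mulmxBr (mulmxA U^T U) hU mul1mx subrr.
move: hz; set z := y - _; set w := U^T *m y => hz.
have hy : y = U *m w + z by rewrite /z addrC subrK.
rewrite {1}hy nrmD nrm_orth // dotvC dotv_mul hz.
by rewrite /dotv trmx0 mul0mx mxE mulr0 addr0.
Qed.

Lemma tool2 m n r (M : 'M[R]_(m, n)) U V d i (S : 'M[R]_(n, i.+1)) c :
  @svdw R m n r M U V d -> (i < r)%N -> orth S ->
  (forall y, c * nrm (S *m y) <= nrm (M *m (S *m y))) -> c <= d i ^+ 2.
Proof.
move=> [hU hV hord hpos hM] hir hS hc.
have [y hy0 hy] := ker_exists ((E r i)^T *m V^T *m S).
set x := S *m y.
have hnx : nrm x = nrm y by rewrite nrm_orth.
set w := V^T *m x.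
have hw : forall a : 'I_r, (a < i)%N -> w a 0 = 0.
  by move=> a ha; apply: (ETw ha); rewrite /w /x !mulmxA.
have hMx : nrm (M *m x) <= d i ^+ 2 * nrm w.
  rewrite hM -!mulmxA nrm_orth // -/w.
  apply: (nrm_diag_bound hw) => a ha.
  rewrite ler_sqr ?nnegrE; first by apply: hord.
    by apply: hpos.
  by apply: hpos.
have hwx : nrm w <= nrm x by rewrite [nrm x](pythag x hV) lerDl nrm_ge0.
have := le_trans (hc y) (le_trans hMx (ler_wpM2l (sqr_ge0 _) hwx)).
by rewrite -/x ler_pM2r // hnx nrm_pos.
Qed.

End Tools.


Section Main.
Variable R : rcfType.

Lemma sqrt_le_of (a b : R) : 0 <= b -> a <= b ^+ 2 -> Num.sqrt a <= b.
Proof.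
move=> hb hab; apply: le_trans (ler_wsqrtr hab) _.
by rewrite sqrtr_sqr ger0_norm.
Qed.

Lemma le_sqrt_of (a x : R) : 0 <= a -> a ^+ 2 <= x -> a <= Num.sqrt x.
Proof.
move=> ha hax; apply: le_trans (ler_wsqrtr hax).
by rewrite sqrtr_sqr ger0_norm.
Qed.

Lemma diag_sq_sub r (d : nat -> R) a (w : 'cV[R]_r) :
  diagr r d *m (diagr r d *m w) - a *: w = diagr r (fun k => d k ^+ 2 - a) *m w.
Proof.
apply/matrixP => i j; rewrite !mul_diag_mx !mxE; ring.
Qed.

Lemma boundB m n l r (A : 'M[R]_(m, n)) (Q : 'M[R]_(m, l)) U V (d : nat -> R) a i
  (x : 'cV[R]_l) :
  @svdw R m n r A U V d -> orth Q -> 0 <= a -> (i < r)%N -> 2 * a <= d i ^+ 2 ->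
  (E R r i)^T *m U^T *m Q *m x = 0 ->
  nrm ((A *m A^T *m Q - a *: Q) *m x) <= (d i ^+ 2 - a) ^+ 2 * nrm x.
Proof.
move=> [hU hV hord hpos hA] hQ ha hir hai hC.
set y := Q *m x.
have hny : nrm y = nrm x by rewrite nrm_orth.
set w := U^T *m y; set z := y - U *m w.
have hUz : U^T *m z = 0 by rewrite /z mulmxBr (mulmxA U^T U) hU mul1mx subrr.
have hw : forall k : 'I_r, (k < i)%N -> w k 0 = 0.
  by move=> k hk; apply: (ETw hk); rewrite /w /y !mulmxA.
have hAA : A *m A^T = U *m (diagr r d *m (diagr r d *m U^T)).
  rewrite hA !trmx_mul trmxK tr_diagr -!mulmxA (mulmxA V^T V) hV mul1mx //.
have hB : (A *m A^T *m Q - a *: Q) *m x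
          = U *m (diagr r (fun k => d k ^+ 2 - a) *m w) - a *: z.
  rewrite mulmxBl hAA -!mulmxA -/y -/w -scalemxAl -/y -diag_sq_sub.
  rewrite /z mulmxBr -scalemxAr scalerBr.
  by rewrite opprB addrA subrK.
set v := diagr r (fun k => d k ^+ 2 - a) *m w.
have hcr : dotv (U *m v) z = 0.
  by rewrite dotvC dotv_mul hUz /dotv trmx0 mul0mx mxE.
rewrite hB nrmB nrm_orth // dotvZr hcr mulr0 mulr0 subr0 nrmZ.
have hv : nrm v <= (d i ^+ 2 - a) ^+ 2 * nrm w.
  apply: (nrm_diag_bound hw) => k hk.
  have hdk : d k <= d i by apply: hord.
  have hdk0 : 0 <= d k by apply: hpos.
  have hdi0 : 0 <= d i by apply: hpos.
  have h1 : d k ^+ 2 <= d i ^+ 2.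
    by rewrite ler_sqr ?nnegrE.
  have h2 : 0 <= (d i ^+ 2 - d k ^+ 2) * (d i ^+ 2 + d k ^+ 2 - 2 * a).
    apply: mulr_ge0; first by rewrite subr_ge0.
    have := sqr_ge0 (d k); lra.
  nra.
have hz : a ^+ 2 * nrm z <= (d i ^+ 2 - a) ^+ 2 * nrm z.
  apply: ler_wpM2r; first exact: nrm_ge0.
  rewrite ler_sqr ?nnegrE //; lra.
rewrite -hny (pythag y hU) -/w -/z mulrDr.
exact: lerD.
Qed.

Lemma lowB m n l rB rP (A : 'M[R]_(m, n)) (Q : 'M[R]_(m, l)) a
  UB VB (dB : nat -> R) UP VP (dP : nat -> R) i :
  orth Q -> @svdw R m l rB (A *m A^T *m Q - a *: Q) UB VB dB ->
  @svdw R l n rP (Q^T *m A) UP VP dP -> (i < rB)%N -> (i < rP)%N ->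
  0 < dP i ^+ 2 - a -> dP i ^+ 2 - a <= dB i.
Proof.
move=> hQ hB hP hiB hiP hc.
set c := dP i ^+ 2 - a in hc *.
have hdB : 0 <= dB i by case: hB => _ _ _ hpos _; apply: hpos.
have [hUP hVP hordP hposP hPE] := hP.
have hS : orth (UP *m E R rP i.+1) by apply: orthM hUP (E_orth R hiP).
suff h : c ^+ 2 <= dB i ^+ 2.
  move: h; rewrite ler_sqr ?nnegrE //; exact: ltW.
apply: (tool2 hB hiB hS) => y.
set x := UP *m E R rP i.+1 *m y.
have hnx : nrm x = nrm y by rewrite nrm_orth.
set q := Q *m x.
have hnq : nrm q = nrm x by rewrite nrm_orth.
set B := A *m A^T *m Q - a *: Q.
have hdot : dotv q (B *m x) = nrm ((Q^T *m A)^T *m x) - a * nrm x.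
  rewrite /q dotvC dotv_mul dotvC /B mulmxBl -scalemxAl mulmxBr -scalemxAr.
  rewrite (mulmxA Q^T Q) hQ mul1mx dotvDr dotvNr dotvZr -nrmE.
  congr (_ - _); rewrite -!mulmxA (mulmxA Q^T A) dotv_mul nrmE.
  by rewrite trmx_mul trmxK mulmxA.
have hPx : dP i ^+ 2 * nrm y <= nrm ((Q^T *m A)^T *m x).
  rewrite hPE !trmx_mul trmxK tr_diagr /x -!mulmxA (mulmxA UP^T UP) hUP mul1mx.
  by rewrite nrm_orth //; apply: nrm_diag_top.
have hdot2 : c * nrm x <= dotv q (B *m x) by rewrite hdot /c hnx; nra.
have hsq := nrm_ge0 (B *m x - c *: q).
rewrite nrmB nrmZ hnq dotvZr dotvC in hsq.
have hc0 : 0 <= c by apply: ltW.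
have := ler_wpM2l hc0 hdot2.
nra.
Qed.

Lemma bound_sv m n l r (A : 'M[R]_(m, n)) (Q : 'M[R]_(m, l)) UA VA a i
  (UB : 'M[R]_(m, r)) (VB : 'M[R]_(l, r)) (dB : nat -> R) :
  @svdw R m n (minn m n) A UA VA (sv A) -> orth Q -> 0 <= a ->
  (i < minn m n)%N -> 2 * a <= sv A i ^+ 2 ->
  @svdw R m l r (A *m A^T *m Q - a *: Q) UB VB dB -> (i < r)%N ->
  dB i <= sv A i ^+ 2 - a.
Proof.
move=> hA hQ ha hi hai hB hir.
have := tool1 (C := (E R (minn m n) i)^T *m UA^T *m Q) (c := (sv A i ^+ 2 - a) ^+ 2) hB hir.
have hdB : 0 <= dB i by case: hB => _ _ _ hpos _; apply: hpos.
rewrite ler_sqr ?nnegrE //; last by lra.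
apply => x hx; apply: boundB hA hQ ha hi hai _.
exact: hx.
Qed.

End Main.

Unset Implicit Arguments.
Set Strict Implicit.


Theorem proposition3 (R : rcfType) (m n k s p : nat) (A : 'M[R]_(m, n))
  (Om : 'M[R]_(n, k + s)) (Q : nat -> 'M[R]_(m, k + s)) (alpha : nat -> R) :
  alg2_run A Om p Q alpha ->
  forall j, (j < p)%N -> 0 < alpha j ->
  forall i, (i < k + s)%N ->
    sv ((Q j)^T *m A) i
      <= Num.sqrt (sv (A *m A^T *m Q j - alpha j *: Q j) i + alpha j)
    /\ Num.sqrt (sv (A *m A^T *m Q j - alpha j *: Q j) i + alpha j) <= sv A i.
Proof.
move=> [hQ0 hsp ha0 hstep] j hj hapos i hi.
have hrk : (k + s <= \rank A)%N.
  have h1 : (k + s <= \rank (Q 0%N)^T)%N.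
    have := mxrankM_maxl (Q 0%N)^T (Q 0%N).
    by rewrite hQ0 mxrank1.
  apply: (leq_trans h1); rewrite (eqmx_rank hsp) mxrank_tr.
  exact: mxrankM_maxl.
have hlm : (k + s <= m)%N := leq_trans hrk (rank_leq_row A).
have hln : (k + s <= n)%N := leq_trans hrk (rank_leq_col A).
have hlmn : (k + s <= minn m n)%N by rewrite leq_min hlm hln.
have hl0 : (0 < k + s)%N by apply: leq_ltn_trans hi.
have [UA [VA hA]] := sv_svdw A.
have hAord : forall a b, (a <= b)%N -> (b < minn m n)%N -> sv A b <= sv A a.
  by case: hA.
have hi' : ((k + s).-1 < minn m n)%N.
  by apply: leq_trans hlmn; rewrite prednK.
have inv : forall j, (j <= p)%N ->
    orth (Q j) /\ 0 <= alpha j /\ 2 * alpha j <= sv A (k + s).-1 ^+ 2.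
  elim => [_|j' IH hj'].
    by split => //; rewrite ha0 mulr0; split => //; apply: sqr_ge0.
  have [hQj [ha hb]] := IH (ltnW hj').
  have [d [[W [hQ' hW hord hpos hBe]] hal]] := hstep j' hj'.
  have hB : @svdw R m (k + s) (k + s) (A *m A^T *m Q j' - alpha j' *: Q j')
              (Q j'.+1) W d.
    split => //; first by move=> a b hab hb'; apply: hord; rewrite hab.
  have := bound_sv hA hQj ha hi' hb hB.
  rewrite prednK // => /(_ (leqnn _)) hd.
  split; first exact: hQ'.
  rewrite hal; case: ifP => h; split; lra.
have [hQj [ha hb]] := inv j (ltnW hj).
have hsvi : sv A (k + s).-1 <= sv A i.
  by apply: hAord => //; rewrite -ltnS prednK.
have hsv0 : 0 <= sv A (k + s).-1 by apply: sv_ge0.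
have hai : 2 * alpha j <= sv A i ^+ 2.
  apply: (le_trans hb); rewrite ler_sqr ?nnegrE //; exact: sv_ge0.
have hiA : (i < minn m n)%N := leq_trans hi hlmn.
set B := A *m A^T *m Q j - alpha j *: Q j.
have [UB [VB hB]] := sv_svdw B.
have hiB : (i < minn m (k + s))%N by rewrite leq_min hi (leq_trans hi hlm).
have hBi := bound_sv hA hQj ha hiA hai hB hiB.
have hB0 : 0 <= sv B i by apply: sv_ge0.
split.
  apply: le_sqrt_of; first exact: sv_ge0.
  have [UP [VP hP]] := sv_svdw ((Q j)^T *m A).
  have hiP : (i < minn (k + s) n)%N by rewrite leq_min hi (leq_trans hi hln).
  case: (ltP 0 (sv ((Q j)^T *m A) i ^+ 2 - alpha j)) => hc.
    have := lowB hQj hB hP hiB hiP hc; lra.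
  lra.
apply: sqrt_le_of; first exact: sv_ge0.
lra.
Qed.
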